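(* Assume (A), (R), (S), let $c^{\mathrm{in}}\in\ell^1_1$, and for $N\in\mathbb N$ let $c^N$ be the unique nonnegative $C^1$ solution of the truncated system (T$_N$) with initial data $c^N_k(0)=c^{\mathrm{in}}_k$ for $k\le N$. Then for every $T>0$ and $k\in\mathbb N$ there is a constant $\mathscr C$, depending on $T$ and $k$ (and the data) but not on $N$, such that $$\Bigl\|\frac{d}{dt}c^N_k\Bigr\|_{L^1(0,T)}\le\mathscr C\quad\text{for all }N\ge k.$$
   Context: Standing assumptions on the coefficients ($\mathbb N=\{1,2,\dots\}$): (A) $a_{k,\ell}=a_{\ell,k}$ and $0\le a_{k,\ell}\le A_*(k^\alpha\ell^\beta+k^\beta\ell^\alpha)$ for all $k,\ell\in\mathbb N$, with constants $A_*>0$, $\alpha,\beta\in[0,1]$, $\alpha\le\beta$; (R) $r_k\ge R_*k^\gamma$ for all $k\in\mathbb N$, with $R_*>0$ and $\gamma>\max\{0,\alpha+\beta-1\}$; (S) $s_k\ge 0$ for all $k$, and for every $\mu\ge0$ there is $\mathfrak s_\mu>0$ with $\sum_{k\ge1}k^\mu s_k\le\mathfrak s_\mu$. $\ell^1_1$ is the set of sequences $(c_k)_{k\in\mathbb N}$ with $c_k\ge0$ and $\sum_k kc_k<\infty$. Truncated system (T$_N$): $\frac{d}{dt}c_k^N=\frac12\sum_{\ell=1}^{k-1}a_{k-\ell,\ell}c^N_{k-\ell}c^N_\ell-c^N_k\sum_{\ell=1}^{N-k}a_{k,\ell}c^N_\ell+s_k-r_kc^N_k$ for $k\le N$, and $c^N_k\equiv0$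 for $k>N$. *)

(* Defs.v *)
From Stdlib Require Import Reals Lra Lia.
Open Scope R_scope.

Fixpoint sum_upto (n : nat) (f : nat -> R) : R :=
  match n with
  | O => 0
  | S n' => sum_upto n' f + f (S n')
  end.

Definition npow (k : nat) (x : R) : R := Rpower (INR k) x.

Definition hyp_A (a : nat -> nat -> R) (Astar alpha beta : R) : Prop :=
  0 < Astar /\ 0 <= alpha /\ alpha <= beta /\ beta <= 1 /\
  forall k l : nat, (1 <= k)%nat -> (1 <= l)%nat ->
    a k l = a l k /\ 0 <= a k l /\
    a k l <= Astar * (npow k alpha * npow l beta + npow k beta * npow l alpha).

Definition hyp_R (r : nat -> R) (Rstar gamma alpha beta : R) : Prop :=
  0 < Rstar /\ Rmax 0 (alpha + beta - 1) < gamma /\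
  forall k : nat, (1 <= k)%nat -> Rstar * npow k gamma <= r k.

Definition hyp_S (s : nat -> R) : Prop :=
  (forall k : nat, (1 <= k)%nat -> 0 <= s k) /\
  forall mu : R, 0 <= mu -> exists smu : R, 0 < smu /\
    forall n : nat, sum_upto n (fun k => npow k mu * s k) <= smu.

Definition in_l11 (c : nat -> R) : Prop :=
  (forall k : nat, (1 <= k)%nat -> 0 <= c k) /\
  exists M : R, forall n : nat, sum_upto n (fun k => INR k * c k) <= M.

Definition truncated_rhs (a : nat -> nat -> R) (s r : nat -> R) (N : nat)
    (cN : nat -> R -> R) (k : nat) (t : R) : R :=
  / 2 * sum_upto (k - 1) (fun l => a (k - l)%nat l * cN (k - l)%nat t * cN l t)
  - cN k t * sum_upto (N - k) (fun l => a k l * cN l t)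
  + s k - r k * cN k t.

(* cN is a nonnegative C^1 solution of (T_N) on [0, infinity) with initial
   data cin: for 1 <= k <= N, cN k is continuous from the right at 0,
   differentiable on (0,inf) with derivative given by (T_N) (the right-hand
   side being continuous, the solution is C^1 on [0,inf)), nonnegative on
   [0,inf), cN k 0 = cin k; and cN k = 0 for k > N. *)
Definition truncated_solution (a : nat -> nat -> R) (s r cin : nat -> R)
    (N : nat) (cN : nat -> R -> R) : Prop :=
  (forall k : nat, (1 <= k)%nat -> (k <= N)%nat ->
     cN k 0 = cin k /\
     (forall t, 0 <= t -> 0 <= cN k t) /\
     (forall eps, 0 < eps -> exists delta, 0 < delta /\
        forall t, 0 <= t < delta -> Rabs (cN k t - cN k 0) < eps) /\
     (forall t, 0 < t -> derivable_pt_lim (cN k) t (truncated_rhs a s r N cN k t))) /\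
  (forall k : nat, (N < k)%nat -> forall t, cN k t = 0).

(* Main.v *)
Require Import Defs.
From Stdlib Require Import Reals Lra Lia Arith.
From Coquelicot Require Import Coquelicot.
Open Scope R_scope.

Lemma sum_le n f g : (forall l, (1 <= l <= n)%nat -> f l <= g l) ->
  sum_upto n f <= sum_upto n g.
Proof.
  induction n as [|n IH]; intros H; simpl.
  - lra.
  - apply Rplus_le_compat. apply IH; intros; apply H; lia. apply H; lia.
Qed.

Lemma sum_nonneg n f : (forall l, (1 <= l <= n)%nat -> 0 <= f l) -> 0 <= sum_upto n f.
Proof.
  intros H. apply Rle_trans with (sum_upto n (fun _ => 0)).
  - clear H. induction n; simpl; lra.
  - apply sum_le; auto.
Qed.

Lemma cp_plus (f g : R -> R) x : continuity_pt f x -> continuity_pt g x ->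
  continuity_pt (fun t => f t + g t) x.
Proof. intros; exact (continuity_pt_plus f g x H H0). Qed.
Lemma cp_minus (f g : R -> R) x : continuity_pt f x -> continuity_pt g x ->
  continuity_pt (fun t => f t - g t) x.
Proof. intros; exact (continuity_pt_minus f g x H H0). Qed.
Lemma cp_mult (f g : R -> R) x : continuity_pt f x -> continuity_pt g x ->
  continuity_pt (fun t => f t * g t) x.
Proof. intros; exact (continuity_pt_mult f g x H H0). Qed.
Lemma cp_const (c x : R) : continuity_pt (fun _ => c) x.
Proof. apply continuity_pt_const. intros ? ?; reflexivity. Qed.
Lemma cp_abs (f : R -> R) x : continuity_pt f x -> continuity_pt (fun t => Rabs (f t)) x.
Proof. intros H. apply (continuity_pt_comp f Rabs x H). apply Rcontinuity_abs. Qed.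

Lemma sum_cont n (F : nat -> R -> R) x :
  (forall l, (1 <= l <= n)%nat -> continuity_pt (F l) x) ->
  continuity_pt (fun t => sum_upto n (fun l => F l t)) x.
Proof.
  induction n as [|n IH]; intros H; simpl.
  - apply cp_const.
  - apply cp_plus. apply IH; intros; apply H; lia. apply H; lia.
Qed.

Section S.
Variables (a : nat -> nat -> R) (r s cin : nat -> R) (N : nat) (cN : nat -> R -> R).
Hypothesis hsol : truncated_solution a s r cin N cN.

Lemma e_cont l x : (1 <= l)%nat -> continuity_pt (fun t => cN l (Rmax 0 t)) x.
Proof.
  intros Hl. destruct hsol as [H1 H2].
  destruct (le_lt_dec l N) as [HlN|HlN].
  - destruct (H1 l Hl HlN) as [_ [_ [Hrc Hd]]].
    destruct (Rle_lt_dec x 0) as [Hx|Hx].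
    + unfold continuity_pt, continue_in, limit1_in, limit_in. intros eps He.
      destruct (Hrc eps He) as [d [Hd0 Hb]]. exists d. split; [exact Hd0|].
      intros t [_ Ht]. simpl in *. unfold R_dist in *.
      rewrite (Rmax_left 0 x Hx).
      destruct (Rle_lt_dec t 0) as [Ht0|Ht0].
      * rewrite (Rmax_left 0 t Ht0). unfold Rminus; rewrite Rplus_opp_r, Rabs_R0; lra.
      * rewrite (Rmax_right 0 t) by lra. apply Rabs_def2 in Ht. apply Hb. lra.
    + assert (Hc := derivable_continuous_pt _ _ (exist _ _ (Hd x Hx))).
      unfold continuity_pt, continue_in, limit1_in, limit_in in *. intros eps He.
      destruct (Hc eps He) as [d [Hd0 Hb]]. exists (Rmin d x). split.
      { apply Rmin_pos; lra. }
      intros t [Hdx Ht]. simpl in *. unfold R_dist in *.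
      assert (Hm1 := Rmin_l d x). assert (Hm2 := Rmin_r d x).
      apply Rabs_def2 in Ht as Ht'.
      rewrite (Rmax_right 0 x) by lra. rewrite (Rmax_right 0 t) by lra.
      apply Hb. split; [exact Hdx|]. lra.
  - unfold continuity_pt, continue_in, limit1_in, limit_in. intros eps He.
    exists 1. split; [lra|]. intros t _. simpl. unfold R_dist.
    rewrite !(H2 l HlN). unfold Rminus; rewrite Rplus_opp_r, Rabs_R0; lra.
Qed.

Lemma rhsE_cont k x : (1 <= k)%nat ->
  continuity_pt (fun t => truncated_rhs a s r N (fun l t => cN l (Rmax 0 t)) k t) x.
Proof.
  intros Hk. unfold truncated_rhs.
  apply cp_minus; [apply cp_plus; [apply cp_minus|apply cp_const]|].
  - apply cp_mult; [apply cp_const|]. apply sum_cont. intros l Hl.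
    apply cp_mult; [apply cp_mult; [apply cp_const|]|]; apply e_cont; lia.
  - apply cp_mult; [apply e_cont; lia|]. apply sum_cont. intros l Hl.
    apply cp_mult; [apply cp_const|]; apply e_cont; lia.
  - apply cp_mult; [apply cp_const|apply e_cont; lia].
Qed.

Lemma rhsE_eq k t : 0 <= t ->
  truncated_rhs a s r N (fun l t => cN l (Rmax 0 t)) k t = truncated_rhs a s r N cN k t.
Proof.
  intros Ht. unfold truncated_rhs. cbv beta. rewrite (Rmax_right 0 t Ht). reflexivity.
Qed.

Lemma e_deriv l x : (1 <= l <= N)%nat -> 0 < x ->
  derivable_pt_lim (fun t => cN l (Rmax 0 t)) x (truncated_rhs a s r N cN l x).
Proof.
  intros Hl Hx. destruct hsol as [H1 _].
  destruct (H1 l ltac:(lia) ltac:(lia)) as [_ [_ [_ Hd]]].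
  intros eps He. destruct (Hd x Hx eps He) as [d Hdd].
  assert (Hp : 0 < Rmin d x) by (apply Rmin_pos; [apply cond_pos|lra]).
  exists (mkposreal _ Hp). intros h Hh0 Hh. simpl in Hh.
  assert (Hm1 := Rmin_l d x). assert (Hm2 := Rmin_r d x).
  apply Rabs_def2 in Hh as Hh'.
  rewrite (Rmax_right 0 x) by lra. rewrite (Rmax_right 0 (x + h)) by lra.
  apply Hdd; auto. lra.
Qed.

Definition G j t := / 2 * sum_upto (j - 1) (fun l => a (j - l)%nat l * cN (j - l)%nat t * cN l t) + s j.

Lemma rhs_le_G Astar alpha beta Rstar gamma j t :
  hyp_A a Astar alpha beta -> hyp_R r Rstar gamma alpha beta -> hyp_S s ->
  (1 <= j <= N)%nat -> 0 <= t ->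
  truncated_rhs a s r N cN j t <= G j t /\ 0 <= G j t.
Proof.
  intros [_ [_ [_ [_ HA]]]] [HR0 [_ HR]] [HS _] Hj Ht.
  destruct hsol as [H1 _].
  assert (Hc : forall i, (1 <= i <= N)%nat -> 0 <= cN i t).
  { intros i Hi. destruct (H1 i ltac:(lia) ltac:(lia)) as [_ [Hn _]]. auto. }
  assert (Hr : 0 <= r j).
  { apply Rle_trans with (Rstar * npow j gamma); [|apply HR; lia].
    unfold npow, Rpower. assert (H := exp_pos (gamma * ln (INR j))). nra. }
  assert (HL : 0 <= sum_upto (N - j) (fun l => a j l * cN l t)).
  { apply sum_nonneg. intros l Hl. apply Rmult_le_pos.
    apply (HA j l); lia. apply Hc; lia. }
  assert (HG : 0 <= G j t).
  { unfold G. apply Rplus_le_le_0_compat; [|apply HS; lia].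
    apply Rmult_le_pos; [lra|]. apply sum_nonneg. intros l Hl.
    apply Rmult_le_pos; [apply Rmult_le_pos|]. apply (HA (j - l)%nat l); lia.
    apply Hc; lia. apply Hc; lia. }
  split; [|exact HG].
  unfold truncated_rhs, G.
  assert (0 <= cN j t * sum_upto (N - j) (fun l => a j l * cN l t))
    by (apply Rmult_le_pos; [apply Hc; lia|exact HL]).
  assert (0 <= r j * cN j t) by (apply Rmult_le_pos; [exact Hr|apply Hc; lia]).
  lra.
Qed.

Definition Gb j B := / 2 * sum_upto (j - 1) (fun l => a (j - l)%nat l * B * B) + s j.

Lemma G_le Astar alpha beta j t B :
  hyp_A a Astar alpha beta ->
  (1 <= j <= N)%nat -> 0 <= t ->
  (forall i, (1 <= i <= j - 1)%nat -> cN i t <= B) -> G j t <= Gb j B.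
Proof.
  intros [_ [_ [_ [_ HA]]]] Hj Ht HB.
  destruct hsol as [H1 _].
  assert (Hc : forall i, (1 <= i <= N)%nat -> 0 <= cN i t).
  { intros i Hi. destruct (H1 i ltac:(lia) ltac:(lia)) as [_ [Hn _]]. auto. }
  unfold G, Gb. apply Rplus_le_compat_r. apply Rmult_le_compat_l; [lra|].
  apply sum_le. intros l Hl.
  assert (Ha := proj1 (proj2 (HA (j - l)%nat l ltac:(lia) ltac:(lia)))).
  assert (0 <= cN (j - l)%nat t) by (apply Hc; lia).
  assert (0 <= cN l t) by (apply Hc; lia).
  assert (cN (j - l)%nat t <= B) by (apply HB; lia).
  assert (cN l t <= B) by (apply HB; lia).
  apply Rmult_le_compat; [apply Rmult_le_pos; lra|lra| |lra].
  apply Rmult_le_compat_l; lra.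
Qed.

End S.

Lemma Gb_nonneg a s Astar alpha beta j B : hyp_A a Astar alpha beta -> hyp_S s ->
  (1 <= j)%nat -> 0 <= B -> 0 <= Gb a s j B.
Proof.
  intros [_ [_ [_ [_ HA]]]] [HS _] Hj HB. unfold Gb.
  apply Rplus_le_le_0_compat; [|apply HS; lia].
  apply Rmult_le_pos; [lra|]. apply sum_nonneg. intros l Hl.
  assert (Ha := proj1 (proj2 (HA (j - l)%nat l ltac:(lia) ltac:(lia)))).
  apply Rmult_le_pos; [apply Rmult_le_pos|]; lra.
Qed.

Lemma bounds
  (a : nat -> nat -> R) (r s cin : nat -> R)
  (Astar alpha beta Rstar gamma : R)
  (c : nat -> nat -> R -> R)
  (hA : hyp_A a Astar alpha beta)
  (hR : hyp_R r Rstar gamma alpha beta)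
  (hS : hyp_S s)
  (hc : forall N : nat, (1 <= N)%nat -> truncated_solution a s r cin N (c N))
  (T : R) (HT : 0 < T) :
  forall n, exists B, 0 <= B /\ forall N j t, (1 <= N)%nat -> (1 <= j <= n)%nat ->
    0 <= t <= T -> c N j t <= B.
Proof.
  induction n as [|n [B [HB0 HB]]].
  - exists 0. split; [lra|]. intros; lia.
  - set (Gj := Gb a s (S n) B).
    assert (HG0 : 0 <= Gj) by (apply (Gb_nonneg a s Astar alpha beta); auto; lia).
    exists (Rmax B (cin (S n) + Gj * T)). split.
    { apply Rle_trans with B; [lra|apply Rmax_l]. }
    intros N j t HN Hj Ht.
    destruct (Nat.eq_dec j (S n)) as [->|Hjn].
    2: { apply Rle_trans with B; [apply HB; auto; lia|apply Rmax_l]. }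
    destruct (le_lt_dec (S n) N) as [HnN|HnN].
    2: { destruct (hc N HN) as [_ H2]. rewrite (H2 _ HnN).
         apply Rle_trans with B; [lra|apply Rmax_l]. }
    apply Rle_trans with (cin (S n) + Gj * T); [|apply Rmax_r].
    destruct (hc N HN) as [H1 H2].
    destruct (H1 (S n) ltac:(lia) HnN) as [Hin _].
    assert (Hm := MVT_gen (fun t => c N (S n) (Rmax 0 t)) 0 t
                   (fun x => truncated_rhs a s r N (c N) (S n) x)).
    cbv zeta in Hm. rewrite (Rmin_left 0 t), (Rmax_right 0 t) in Hm by lra.
    destruct Hm as [xi [Hxi Heq]].
    { intros x Hx. apply is_derive_Reals. apply e_deriv with cin; [apply hc; lia|lia|lra]. }
    { intros x Hx. apply (e_cont a r s cin N (c N) (hc N HN)); lia. }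
    cbv beta in Heq. idtac. 
    rewrite (Rmax_right 0 0) in Heq by lra. rewrite Hin in Heq.
    destruct (rhs_le_G a r s cin N (c N) (hc N HN) Astar alpha beta Rstar gamma (S n) xi
                hA hR hS ltac:(lia) ltac:(lra)) as [Hr1 _].
    assert (Hr2 : G a s (c N) (S n) xi <= Gj).
    { apply (G_le a r s cin N (c N) (hc N HN) Astar alpha beta); auto; try lia; try lra.
      intros i Hi. apply HB; [lia|lia|lra]. }
    assert (truncated_rhs a s r N (c N) (S n) xi * (t - 0) <= Gj * T).
    { apply Rle_trans with (Gj * (t - 0)).
      apply Rmult_le_compat_r; lra. apply Rmult_le_compat_l; lra. }
    lra.
Qed.


Theorem mainTheorem10
  (a : nat -> nat -> R) (r s cin : nat -> R)
  (Astar alpha beta Rstar gamma : R)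
  (c : nat -> nat -> R -> R)
  (hA : hyp_A a Astar alpha beta)
  (hR : hyp_R r Rstar gamma alpha beta)
  (hS : hyp_S s)
  (hcin : in_l11 cin)
  (hc : forall N : nat, (1 <= N)%nat -> truncated_solution a s r cin N (c N)) :
  forall (T : R) (k : nat), 0 < T -> (1 <= k)%nat ->
  exists C : R, forall N : nat, (k <= N)%nat ->
    exists pr : Riemann_integrable
                  (fun t => Rabs (truncated_rhs a s r N (c N) k t)) 0 T,
      RiemannInt pr <= C.
Proof.
  intros T k HT Hk.
  destruct (bounds a r s cin Astar alpha beta Rstar gamma c hA hR hS hc T HT (k - 1))
    as [B [HB0 HB]].
  set (Gk := Gb a s k B).
  assert (HG0 : 0 <= Gk) by (apply (Gb_nonneg a s Astar alpha beta); auto).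
  exists (2 * Gk * T + cin k + 2). intros N HN.
  assert (HN1 : (1 <= N)%nat) by lia.
  assert (hsol := hc N HN1).
  set (rE := fun t => truncated_rhs a s r N (fun l t => c N l (Rmax 0 t)) k t).
  set (hE := fun t => Rabs (rE t)).
  assert (HcE : forall x, continuity_pt hE x).
  { intros x. unfold hE. apply cp_abs. apply (rhsE_cont a r s cin N (c N) hsol); auto. }
  assert (HcR : forall x, continuity_pt rE x).
  { intros x. apply (rhsE_cont a r s cin N (c N) hsol); auto. }
  assert (Hex : forall u v, ex_RInt hE u v).
  { intros u v. apply (ex_RInt_continuous (V:=R_CompleteNormedModule)). intros z _. apply continuity_pt_filterlim. auto. }
  assert (Hext : forall x, 0 <= x -> Rabs (truncated_rhs a s r N (c N) k x) = hE x).
  { intros x Hx. unfold hE, rE. rewrite (rhsE_eq a r s N (c N)) by lra. reflexivity. }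
  assert (Hex0 : ex_RInt (fun t => Rabs (truncated_rhs a s r N (c N) k t)) 0 T).
  { apply ex_RInt_ext with hE; [|apply Hex].
    intros x Hx. rewrite Rmin_left, Rmax_right in Hx by lra. rewrite Hext by lra. reflexivity. }
  exists (ex_RInt_Reals_0 _ _ _ Hex0).
  rewrite <- RInt_Reals.
  rewrite (RInt_ext _ hE).
  2:{ intros x Hx. rewrite Rmin_left, Rmax_right in Hx by lra. apply Hext; lra. }
  destruct (continuity_ab_maj hE 0 T ltac:(lra) (fun x _ => HcE x)) as [Mx [HK _]].
  set (K := hE Mx).
  assert (HK0 : 0 <= K) by (unfold K, hE; apply Rabs_pos).
  destruct hsol as [H1 H2].
  destruct (H1 k Hk HN) as [Hin [Hnn [Hrc _]]].
  destruct (Hrc 1 ltac:(lra)) as [d [Hd0 Hd]].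
  set (eps := Rmin (Rmin (d / 2) (T / 2)) (/ (K + 1))).
  assert (HK1 : 0 < / (K + 1)) by (apply Rinv_0_lt_compat; lra).
  assert (He0 : 0 < eps).
  { unfold eps. apply Rmin_pos; [apply Rmin_pos; lra|lra]. }
  assert (He1 : eps <= d / 2) by (unfold eps; eapply Rle_trans; [apply Rmin_l|apply Rmin_l]).
  assert (He2 : eps <= T / 2) by (unfold eps; eapply Rle_trans; [apply Rmin_l|apply Rmin_r]).
  assert (He3 : eps <= / (K + 1)) by (unfold eps; apply Rmin_r).
  assert (HeK : eps * K <= 1).
  { apply Rle_trans with (/ (K + 1) * K). apply Rmult_le_compat_r; lra.
    replace (/ (K + 1) * K) with (1 - / (K + 1)) by (field; lra). lra. }
  assert (Hsplit : RInt hE 0 T = RInt hE 0 eps + RInt hE eps T).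
  { rewrite <- (RInt_Chasles hE 0 eps T) by apply Hex. reflexivity. }
  rewrite Hsplit.
  assert (P1 : RInt hE 0 eps <= eps * K).
  { apply Rle_trans with (RInt (fun _ => K) 0 eps).
    apply RInt_le; [lra|apply Hex|apply ex_RInt_const|].
    intros x Hx. apply HK; lra.
    rewrite RInt_const. change (scal (eps - 0) K) with ((eps - 0) * K). lra. }
  set (e := fun t => c N k (Rmax 0 t)).
  assert (Hftc : is_RInt rE eps T (minus (e T) (e eps))).
  { apply (is_RInt_derive (V:=R_CompleteNormedModule) e rE eps T).
    - intros x Hx. rewrite Rmin_left, Rmax_right in Hx by lra.
      apply is_derive_Reals. unfold rE. rewrite (rhsE_eq a r s N (c N)) by lra.
      unfold e; apply (e_deriv a r s cin N (c N) (conj H1 H2) k x); [lia|lra].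
    - intros x _. apply continuity_pt_filterlim. auto. }
  assert (Hg : is_RInt (fun y => minus (2 * Gk) (rE y)) eps T
                 (minus (scal (T - eps) (2 * Gk)) (minus (e T) (e eps)))).
  { apply (is_RInt_minus (V:=R_NormedModule) (fun _ => 2 * Gk) rE eps T); [apply (is_RInt_const (V:=R_NormedModule))|exact Hftc]. }
  assert (P2 : RInt hE eps T <= (T - eps) * (2 * Gk) - (e T - e eps)).
  { apply Rle_trans with (RInt (fun y => minus (2 * Gk) (rE y)) eps T).
    2:{ rewrite (is_RInt_unique _ _ _ _ Hg). apply Req_le. reflexivity. }
    apply RInt_le; [lra|apply Hex|eexists; exact Hg|].
    intros x Hx. change (minus (2 * Gk) (rE x)) with (2 * Gk - rE x).
    unfold hE, rE. rewrite (rhsE_eq a r s N (c N)) by lra.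
    destruct (rhs_le_G a r s cin N (c N) (conj H1 H2) Astar alpha beta Rstar gamma k x
                hA hR hS ltac:(lia) ltac:(lra)) as [Hr1 Hr0].
    assert (Hr2 : G a s (c N) k x <= Gk).
    { apply (G_le a r s cin N (c N) (conj H1 H2) Astar alpha beta); auto; try lia; try lra.
      intros i Hi. apply HB; [lia|lia|lra]. }
    unfold Rabs. destruct Rcase_abs; lra. }
  assert (HeT : 0 <= e T) by (unfold e; rewrite Rmax_right by lra; apply Hnn; lra).
  assert (Hee : e eps < cin k + 1).
  { unfold e. rewrite Rmax_right by lra. rewrite <- Hin.
    assert (Hb := Hd eps ltac:(lra)). apply Rabs_def2 in Hb. lra. }
  assert (eps * (2 * Gk) >= 0) by (apply Rle_ge, Rmult_le_pos; lra).
  lra.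
Qed.
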